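(* Suppose $\widehat{\mathcal L}^{Y\text{-}A\text{-}B}$-uniform-monotonicity holds for the SCC $F$. Then (a) for all $(j,\theta')\in\mathcal I\times\Theta$, if $Z^*$ is a $j$-$Z^*$-$\theta'$-max set then $Z^*\subseteq F(\theta')$; and (b) for all $(j,\theta,\theta')\in\mathcal I\times\Theta\times\Theta$, if $\widehat\Gamma_j^{A\text{-}B}(\theta)$ is a $j$-$Z^*$-$\theta'$-max set then $\widehat\Gamma_j^{A\text{-}B}(\theta)\subseteq F(\theta')$, where $\widehat\Gamma_j^{A\text{-}B}(\theta)=\bigcup_{y\in\widehat{\mathcal L}_j^{Y\text{-}A\text{-}B}(\mathrm{UNIF}[F(\theta)],\theta)}\mathrm{SUPP}[y]$.
   Context: Standing setup: $\mathcal I=\{1,\dots,I\}$ finite, $I\ge 3$; $\Theta$ finite or countably infinite; $Z$ finite; $Y=\Delta(Z)$; $F:\Theta\to 2^Z\setminus\{\emptyset\}$; $u_i^\theta:Z\to\mathbb R$, $U_i^\theta(y)=\sum_zy_zu_i^\theta(z)$; $\mathcal L_i^Y(\alpha,\theta)=\{y\in Y:U_i^\theta(\alpha)\ge U_i^\theta(y)\}$, $\mathcal L_i^Z(\alpha,\theta)=\{z\in Z:U_i^\theta(\alpha)\ge u_i^\theta(z)\}$, $\mathcal L_i^Z(E,\theta)=\bigcap_{z\in E}\mathcal L_i^Z(z,\theta)$; UNIF$(E)$ is the uniform lottery on $E$. A nonempty $E\subseteq Z$ is an $i$-max set if for some $\theta$, $E\subseteq\arg\max_{z\in E}u_i^\theta(z)$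 and $E\subseteq\arg\max_{z\in Z}u_j^\theta(z)$ for all $j\ne i$. $Z^*=\bigcup_\theta F(\theta)$ if $Z$ is an $i$-max set for some $i$, else $Z^*=Z$. A nonempty $E\subseteq Z^*$ is an $i$-$Z^*$-$\theta$-max set if $E\subseteq\arg\max_{z\in E}u_i^\theta(z)$ and $E\subseteq\arg\max_{z\in Z^*}u_j^\theta(z)$ for all $j\ne i$; $\Lambda^i(E)=\{\theta:E\text{ is an }i\text{-}Z^*\text{-}\theta\text{-max set}\}$ ($=\emptyset$ for $E=\emptyset$); $E$ is an $i$-$Z^*$-max set if $\Lambda^i(E)\ne\emptyset$. $\Theta_i^\theta=\{\theta':F(\theta)\text{ is an }i\text{-}Z^*\text{-}\theta'\text{-max set and }F(\theta)\subseteq F(\theta')\}$; $\Xi_i(\theta)=\{K\subseteq\Theta_i^\theta,K\ne\emptyset:\Theta_i^\theta\cap\Lambda^i(Z^*\cap\mathcal L_i^Z(F(\theta),\theta)\cap\bigcap_{\theta'\in K}F(\theta'))=K\}$. $\widehat{\mathcal L}_i^{Y\text{-}A\text{-}B}(\mathrm{UNIF}[F(\theta)],\theta)=\Delta[Z^*\cap\mathcal L_i^Z(F(\theta),\theta)\cap\bigcup_{K\in\Xi_i(\theta)}\bigcap_{\theta'\in K}F(\theta')]$ if $F(\theta)\subseteq\arg\min_{z\in Z^*}u_i^\theta(z)$, $\Xi_i(\theta)\ne\emptyset$ and $Z^*\cap\mathcal L_i^Z(F(\theta),\theta)$ is an $i$-$Z^*$-max set; otherwise $\Delta(Z^* )\cap\mathcal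 L_i^Y(\mathrm{UNIF}[F(\theta)],\theta)$. $\widehat{\mathcal L}^{Y\text{-}A\text{-}B}$-uniform-monotonicity: for all $\theta,\theta'$, [$\widehat{\mathcal L}_i^{Y\text{-}A\text{-}B}(\mathrm{UNIF}[F(\theta)],\theta)\subseteq\mathcal L_i^Y(\mathrm{UNIF}[F(\theta)],\theta')$ for all $i$] implies $F(\theta)\subseteq F(\theta')$. *)

(* Defs.v *)
(* Utilities take values in an arbitrary real field R
   (covers the paper's R = reals). Sets of outcomes / lotteries / states
   are Prop-valued predicates, since Theta may be countably infinite. *)
From HB Require Import structures.
From mathcomp Require Import all_boot all_order all_algebra.
Set Implicit Arguments. Unset Strict Implicit. Unset Printing Implicit Defensive.
Import Order.TTheory GRing.Theory Num.Theory.
Local Open Scope ring_scope.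

Section Defs.
Variables (R : realFieldType) (Z : finType) (Theta : Type) (n : nat).
Variable u : 'I_n -> Theta -> Z -> R.
Variable F : Theta -> {set Z}.

Definition psubset {T : Type} (A B : T -> Prop) := forall x, A x -> B x.
Definition pnonempty {T : Type} (A : T -> Prop) := exists x, A x.
Definition pinter {T : Type} (A B : T -> Prop) : T -> Prop := fun x => A x /\ B x.

Definition is_lottery (y : Z -> R) : Prop :=
  (forall z, 0 <= y z) /\ \sum_(z : Z) y z = 1.
Definition SUPP (y : Z -> R) : Z -> Prop := fun z => 0 < y z.
Definition Delta (E : Z -> Prop) : (Z -> R) -> Prop :=
  fun y => is_lottery y /\ psubset (SUPP y) E.

Definition EU (i : 'I_n) (th : Theta) (y : Z -> R) : R :=
  \sum_(z : Z) y z * u i th z.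

Definition LY (i : 'I_n) (alpha : Z -> R) (th : Theta) : (Z -> R) -> Prop :=
  fun y => is_lottery y /\ EU i th y <= EU i th alpha.
(* L_i^Z(E, th) = cap_{z in E} L_i^Z(z, th), z seen as a degenerate lottery *)
Definition LZset (i : 'I_n) (E : Z -> Prop) (th : Theta) : Z -> Prop :=
  fun z => forall z', E z' -> u i th z <= u i th z'.

Definition UNIF (E : {set Z}) : Z -> R :=
  fun z => if z \in E then (#|E|%:R)^-1 else 0.

Definition argmax (E : Z -> Prop) (f : Z -> R) : Z -> Prop :=
  fun z => E z /\ forall z', E z' -> f z' <= f z.
Definition argmin (E : Z -> Prop) (f : Z -> R) : Z -> Prop :=
  fun z => E z /\ forall z', E z' -> f z <= f z'.

Definition fullZ : Z -> Prop := fun _ => True.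

Definition imax_set (i : 'I_n) (E : Z -> Prop) : Prop :=
  pnonempty E /\ exists th : Theta,
    psubset E (argmax E (u i th)) /\
    forall j : 'I_n, j != i -> psubset E (argmax fullZ (u j th)).

Definition Zstar : Z -> Prop :=
  fun z => ((exists i, imax_set i fullZ) /\ (exists th, z \in F th))
        \/ (~ (exists i, imax_set i fullZ)).

Definition izmax (i : 'I_n) (th : Theta) (E : Z -> Prop) : Prop :=
  pnonempty E /\ psubset E Zstar /\ psubset E (argmax E (u i th)) /\
  forall j : 'I_n, j != i -> psubset E (argmax Zstar (u j th)).

Definition Lambda (i : 'I_n) (E : Z -> Prop) : Theta -> Prop :=
  fun th => izmax i th E.

Definition izmax_set (i : 'I_n) (E : Z -> Prop) : Prop := pnonempty (Lambda i E).

Definition inF (th : Theta) : Z -> Prop := fun z => z \in F th.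

Definition Theta_i (i : 'I_n) (th : Theta) : Theta -> Prop :=
  fun th' => izmax i th' (inF th) /\ psubset (inF th) (inF th').

Definition capF (K : Theta -> Prop) : Z -> Prop :=
  fun z => forall th', K th' -> z \in F th'.

Definition Xi (i : 'I_n) (th : Theta) : (Theta -> Prop) -> Prop :=
  fun K => pnonempty K /\ psubset K (Theta_i i th) /\
    forall th'', (Theta_i i th th'' /\
       Lambda i (pinter (pinter Zstar (LZset i (inF th) th)) (capF K)) th'')
       <-> K th''.

Definition LhatCond (i : 'I_n) (th : Theta) : Prop :=
  psubset (inF th) (argmin Zstar (u i th)) /\ pnonempty (Xi i th) /\
  izmax_set i (pinter Zstar (LZset i (inF th) th)).

Definition LhatYAB (i : 'I_n) (th : Theta) : (Z -> R) -> Prop :=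
  fun y =>
    (LhatCond i th /\
     Delta (pinter (pinter Zstar (LZset i (inF th) th))
                   (fun z => exists K, Xi i th K /\ capF K z)) y)
    \/ (~ LhatCond i th /\
        Delta Zstar y /\ LY i (UNIF (F th)) th y).

Definition Lhat_uniform_monotonic : Prop :=
  forall th th' : Theta,
    (forall i : 'I_n, psubset (LhatYAB i th) (LY i (UNIF (F th)) th')) ->
    F th \subset F th'.

Definition GammaHat (j : 'I_n) (th : Theta) : Z -> Prop :=
  fun z => exists y, LhatYAB j th y /\ SUPP y z.

End Defs.

(* Main.v *)
Require Import Defs.
From HB Require Import structures.
From mathcomp Require Import all_boot all_order all_algebra.
From Stdlib Require Import Classical ClassicalEpsilon.
From mathcomp Require Import ring.
Import Order.TTheory GRing.Theory Num.Theory.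
Local Open Scope ring_scope.
Set Implicit Arguments. Unset Strict Implicit.

Lemma EU_le {R : realFieldType} {Z : finType} {Theta : Type} {n : nat}
  (u : 'I_n -> Theta -> Z -> R) i t y M :
  is_lottery y -> (forall z, SUPP y z -> u i t z <= M) -> EU u i t y <= M.
Proof.
move=> [y0 y1] H; rewrite /EU.
apply: (@le_trans _ _ (\sum_z y z * M)).
  apply: ler_sum => z _; have := y0 z; rewrite le0r => /orP [/eqP ->|yp].
    by rewrite !mul0r.
  apply: ler_wpM2l; [exact: ltW | exact: H].
by rewrite -mulr_suml y1 mul1r.
Qed.

Lemma EU_ge {R : realFieldType} {Z : finType} {Theta : Type} {n : nat}
  (u : 'I_n -> Theta -> Z -> R) i t y M :
  is_lottery y -> (forall z, SUPP y z -> M <= u i t z) -> M <= EU u i t y.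
Proof.
move=> [y0 y1] H; rewrite /EU.
apply: (@le_trans _ _ (\sum_z y z * M)).
  by rewrite -mulr_suml y1 mul1r.
apply: ler_sum => z _; have := y0 z; rewrite le0r => /orP [/eqP ->|yp].
  by rewrite !mul0r.
apply: ler_wpM2l; [exact: ltW | exact: H].
Qed.

Definition dlt {R : realFieldType} {Z : finType} (w : Z) : Z -> R :=
  fun z => (z == w)%:R.

Lemma sum_dlt {R : realFieldType} {Z : finType} (w : Z) (f : Z -> R) :
  \sum_z dlt w z * f z = f w.
Proof.
rewrite (bigD1 w) //= /dlt eqxx mul1r big1 ?addr0 // => z /negbTE ->.
by rewrite mul0r.
Qed.

Lemma dlt_lot {R : realFieldType} {Z : finType} (w : Z) :
  is_lottery (@dlt R Z w).
Proof.
split; first by move=> z; rewrite /dlt ler0n.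
by rewrite -(sum_dlt w (fun _ => 1)); apply: eq_bigr => z _; rewrite mulr1.
Qed.

Lemma dlt_supp {R : realFieldType} {Z : finType} (w z : Z) :
  SUPP (@dlt R Z w) z <-> z = w.
Proof.
rewrite /SUPP /dlt; split; last by move=> ->; rewrite eqxx ltr01.
by case: eqP => // _; rewrite ltxx.
Qed.

Lemma unif_lot {R : realFieldType} {Z : finType} (E : {set Z}) :
  E != set0 -> is_lottery (@UNIF R Z E) /\ (forall z, SUPP (@UNIF R Z E) z <-> z \in E).
Proof.
move=> hE; have cp : (0 < #|E|)%N by rewrite card_gt0.
have cR : 0 < (#|E|%:R : R) by rewrite ltr0n.
split; [split|].
- by move=> z; rewrite /UNIF; case: ifP => _ //; rewrite invr_ge0 ltW.
- by rewrite /UNIF -big_mkcond /= sumr_const -[X in X = 1]mulr_natl mulfV // (gt_eqF cR).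
- move=> z; rewrite /SUPP /UNIF; case: ifP => h; rewrite ?ltxx ?invr_gt0 ?cR; split => //.
Qed.

Lemma inF_Zs {R : realFieldType} {Z : finType} {Theta : Type} {n : nat}
  (u : 'I_n -> Theta -> Z -> R) (F : Theta -> {set Z}) th :
  psubset (inF F th) (Zstar u F).
Proof.
move=> z zF; case: (classic (exists i, imax_set u i (@fullZ Z))) => hA.
  by left; split => //; exists th.
by right.
Qed.

Lemma izmax_down {R : realFieldType} {Z : finType} {Theta : Type} {n : nat}
  (u : 'I_n -> Theta -> Z -> R) (F : Theta -> {set Z}) i t E S :
  izmax u F i t E -> psubset S E -> pnonempty S -> izmax u F i t S.
Proof.
move=> [_ [hZ [hA hO]]] hS hne; split => //; split; first by move=> z /hS /hZ.
split; first by move=> z zS; split => // z' z'S; exact: (hA z (hS z zS)).2 z' (hS z' z'S).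
by move=> j ji z zS; exact: hO j ji z (hS z zS).
Qed.

Lemma Lhat_basic {R : realFieldType} {Z : finType} {Theta : Type} {n : nat}
  (u : 'I_n -> Theta -> Z -> R) (F : Theta -> {set Z}) i th y :
  LhatYAB u F i th y -> is_lottery y /\ psubset (SUPP y) (Zstar u F).
Proof.
case=> [[_ [ly sy]]|[_ [[ly sy] _]]]; split => // z /sy; first by case=> [[]].
Qed.

Lemma unif_in_Lhat {R : realFieldType} {Z : finType} {Theta : Type} {n : nat}
  (u : 'I_n -> Theta -> Z -> R) (F : Theta -> {set Z}) i th :
  F th != set0 -> LhatYAB u F i th (UNIF R (F th)).
Proof.
move=> hF; have [lu su] := unif_lot (R:=R) hF.
case: (classic (LhatCond u F i th)) => hc.
  left; split => //; split => // z /su zF.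
  have [hm [[K hK] _]] := hc.
  split; first split.
  - exact: inF_Zs zF.
  - by move=> zz zzF; exact: (hm z zF).2 zz (inF_Zs u zzF).
  by exists K; split => // t Kt; exact: (hK.2.1 t Kt).2 z zF.
right; split => //; split; first by split => // z /su; exact: inF_Zs.
by split.
Qed.

Lemma ML {R : realFieldType} {Z : finType} {Theta : Type} {n : nat}
  (u : 'I_n -> Theta -> Z -> R) (F : Theta -> {set Z}) j th th' E :
  izmax u F j th' E -> psubset (inF F th) E ->
  (forall y, LhatYAB u F j th y -> psubset (SUPP y) E) -> F th != set0 ->
  forall i, psubset (LhatYAB u F i th) (LY u i (UNIF R (F th)) th').
Proof.
move=> hE FE hS hF i y Hy; have [ly sy] := Lhat_basic Hy.
have [lu su] := unif_lot (R:=R) hF.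
case/set0Pn: (hF) => a aF; have aE := FE a aF.
case: hE => [_ [_ [hA hO]]].
split => //; case: (eqVneq i j) => [eij|ij]; first subst i.
  apply: (@le_trans _ _ (u j th' a)).
    apply: EU_le => // z /(hS _ Hy) zE; exact: (hA a aE).2 z zE.
  apply: EU_ge => // z /su zF; exact: (hA z (FE z zF)).2 a aE.
apply: (@le_trans _ _ (u i th' a)).
  apply: EU_le => // z /sy zs; exact: (hO i ij a aE).2 z zs.
apply: EU_ge => // z /su zF; exact: (hO i ij z (FE z zF)).2 a (inF_Zs u aF).
Qed.

Definition pb (P : Prop) : bool :=
  if excluded_middle_informative P then true else false.
Lemma pbE (P : Prop) : pb P <-> P.
Proof. by rewrite /pb; case: excluded_middle_informative. Qed.

Definition fs {Z : finType} (S : Z -> Prop) : {set Z} := [set z | pb (S z)].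

Lemma fs_card {Z : finType} (A B : Z -> Prop) :
  psubset A B -> ~ psubset B A -> (#|fs A| < #|fs B|)%N.
Proof.
move=> ab nba; apply: proper_card; rewrite properE; apply/andP; split.
  by apply/subsetP => z; rewrite !inE => /pbE /ab /pbE.
apply/negP => /subsetP h; apply: nba => z bz.
have := h z; rewrite !inE => hh; apply/pbE; apply: hh; exact/pbE.
Qed.

Lemma Xi_exists {R : realFieldType} {Z : finType} {Theta : Type} {n : nat}
  (u : 'I_n -> Theta -> Z -> R) (F : Theta -> {set Z}) j th t' :
  F th != set0 ->
  psubset (inF F th) (pinter (Zstar u F) (LZset u j (inF F th) th)) ->
  Theta_i u F j th t' ->
  Lambda u F j (pinter (Zstar u F) (LZset u j (inF F th) th)) t' ->
  pnonempty (Xi u F j th).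
Proof.
set B := pinter _ _ => hF FB Tt' LB.
case/set0Pn: (hF) => a aF.
pose Kof (S : Z -> Prop) := fun t => Theta_i u F j th t /\ Lambda u F j S t.
suff: forall m (S : Z -> Prop), (#|fs S| <= m)%N -> psubset S B ->
  psubset (inF F th) S -> Lambda u F j S t' ->
  psubset (pinter B (capF F (Kof S))) S -> pnonempty (Xi u F j th).
  by move/(_ _ B (leqnn _)); apply => // z [].
elim=> [|m IH] S cS SB FS LS inv.
  move: cS; rewrite leqn0 cards_eq0 => /eqP e.
  have : a \in fs S by rewrite inE; apply/pbE; exact: FS.
  by rewrite e inE.
set S' := pinter B (capF F (Kof S)).
have FS' : psubset (inF F th) S'.
  by move=> z zF; split; [exact: FB|move=> t [[_ h] _]; exact: h z zF].
case: (classic (psubset S S')) => hss.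
  exists (Kof S); split; first by exists t'.
  split; first by move=> t [].
  move=> t; split => [[Tt Lt]|[Tt Lt]]; split => //.
    by apply: izmax_down Lt hss _; exists a; exact: FS.
  by apply: izmax_down Lt inv _; exists a; exact: FS'.
apply: (IH S') => //.
- by rewrite -ltnS; apply: leq_trans cS; apply: fs_card.
- by move=> z [].
- by apply: izmax_down LS inv _; exists a; exact: FS'.
move=> z [Bz cz]; split => // t [Tt Lt]; apply: cz; split => //.
by apply: izmax_down Lt inv _; exists a; exact: FS'.
Qed.

Lemma mix {R : realFieldType} {Z : finType} (f : Z -> R) (w l : Z) (c : R) :
  f l < c -> exists y : Z -> R, is_lottery y /\
    (forall z, SUPP y z -> z = w \/ z = l) /\ SUPP y w /\
    \sum_z y z * f z <= c.
Proof.
move=> hl.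
pose d := c - f l; pose D := `|f w - f l| + d.
have d0 : 0 < d by rewrite subr_gt0.
have D0 : 0 < D by rewrite ltr_wpDl.
pose lam := d / D.
have l0 : 0 < lam by rewrite divr_gt0.
have l1 : lam <= 1 by rewrite ler_pdivrMr // mul1r lerDr.
exists (fun z => lam * dlt w z + (1 - lam) * dlt l z).
split; [split|split; [|split]].
- move=> z; apply: addr_ge0; apply: mulr_ge0; rewrite /dlt ?ler0n ?subr_ge0 //; exact: ltW.
- rewrite big_split /= -!mulr_sumr !(dlt_lot _).2 !mulr1; by rewrite addrC subrK.
- move=> z; rewrite /SUPP /dlt; case: (eqVneq z w) => [->|zw]; first by left.
  case: (eqVneq z l) => [->|zl]; first by right.
  by rewrite !mulr0 addr0 ltxx.
- rewrite /SUPP /dlt eqxx mulr1; apply: ltr_wpDr => //.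
  by rewrite mulr_ge0 ?subr_ge0 ?ler0n.
- have -> : \sum_z (lam * dlt w z + (1 - lam) * dlt l z) * f z =
            lam * f w + (1 - lam) * f l.
    rewrite -(sum_dlt w (fun z => lam * f z)) -(sum_dlt l (fun z => (1 - lam) * f z)).
    by rewrite -big_split /=; apply: eq_bigr => z _; ring.
  have e : lam * f w + (1 - lam) * f l = f l + lam * (f w - f l).
    by ring.
  rewrite e -lerBrDl -/d.
  apply: (@le_trans _ _ (lam * `|f w - f l|)); first by rewrite (ler_pM2l l0) ler_norm.
  rewrite /lam mulrAC ler_pdivrMr // (ler_pM2l d0).
  by rewrite /D lerDl ltW.
Qed.

Unset Implicit Arguments.
Set Strict Implicit.

Theorem lemma9 (R : realFieldType) (Z : finType) (Theta : countType) (n : nat)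
  (u : 'I_n -> Theta -> Z -> R) (F : Theta -> {set Z})
  (hn : (3 <= n)%N) (hF : forall th, F th != set0) :
  Lhat_uniform_monotonic u F ->
  (forall (j : 'I_n) (th' : Theta),
      izmax u F j th' (Zstar u F) -> psubset (Zstar u F) (inF F th')) /\
  (forall (j : 'I_n) (th th' : Theta),
      izmax u F j th' (GammaHat u F j th) ->
      psubset (GammaHat u F j th) (inF F th')).
Proof.
move=> mono.
have Fsub : forall j th th' E, izmax u F j th' E -> psubset (inF F th) E ->
    (forall y, LhatYAB u F j th y -> psubset (SUPP y) E) ->
    psubset (inF F th) (inF F th').
  move=> j th th' E hE FE hS z zF.
  exact: (subsetP (mono th th' (ML hE FE hS (hF th))) z zF).
have partA : forall j th', izmax u F j th' (Zstar u F) -> psubset (Zstar u F) (inF F th').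
  move=> j th' hz z [[hA [t zt]]|nA].
    apply: (Fsub j t th' _ hz (fun w wt => inF_Zs u wt)) => //.
    by move=> y hy; exact: (Lhat_basic hy).2.
  exfalso; apply: (nA); exists j; split; first by exists z.
  have [_ [_ [hA hO]]] := hz.
  exists th'; split.
    move=> x _; split => // z' _.
    exact: (hA x (or_intror nA)).2 z' (or_intror nA).
  move=> k kj x _; split => // z' _.
  exact: (hO k kj x (or_intror nA)).2 z' (or_intror nA).
split; first exact: partA.
move=> j th th' hE.
have [lu su] := unif_lot (R:=R) (hF th).
have FE : psubset (inF F th) (GammaHat u F j th).
  move=> z zF; exists (UNIF R (F th)); split; first exact: unif_in_Lhat.
  exact/su.
have Fth' := Fsub j th th' _ hE FE (fun y hy z hz => ex_intro _ y (conj hy hz)).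
case/set0Pn: (hF th) => a aF.
have ThetaI : Theta_i u F j th th'.
  split => //; apply: izmax_down hE FE _; by exists a.
case: (classic (LhatCond u F j th)) => [hc|nc].
  move=> z [y [[[_ hd]|[nc _]] sz]]; last by [].
  have [[zs zL] [K [hK cK]]] := hd.2 z sz.
  apply: cK; apply: (hK.2.2 th').1; split => //.
  apply: izmax_down hE _ _.
    move=> w hw; exists (dlt w); split; last exact/dlt_supp.
    left; split => //; split; first exact: dlt_lot.
    move=> v /dlt_supp ->; split; first exact: hw.1.
    by exists K; split => //; exact: hw.2.
  exists a; split; first split.
  - exact: inF_Zs aF.
  - by move=> z' z'F; exact: (hc.1 a aF).2 z' (inF_Zs u z'F).
  by move=> t Kt; exact: (hK.2.1 t Kt).2 a aF.
set c := EU u j th (UNIF R (F th)).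
case: (classic (exists l, Zstar u F l /\ u j th l < c)) => [[l [zl ul]]|hlow].
  have ZsE : psubset (Zstar u F) (GammaHat u F j th).
    move=> w zw; have [y [ly [sy [yw ey]]]] := mix w ul.
    exists y; split => //; right; split => //; split.
      by split => // z /sy [->|->].
    by split.
  move=> z [y [hy sz]].
  apply: (partA j th' (izmax_down hE ZsE _)); first by exists l.
  exact: (Lhat_basic hy).2.
exfalso; apply: (nc).
have hl : forall l, Zstar u F l -> c <= u j th l.
  by move=> l zl; rewrite leNgt; apply/negP => h; apply: hlow; exists l.
have Fc : forall b, b \in F th -> u j th b = c.
  move=> b bF.
  have s0 : \sum_z UNIF R (F th) z * (u j th z - c) = 0.
    under eq_bigr do rewrite mulrBr.
    by rewrite sumrB -mulr_suml lu.2 mul1r subrr.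
  have nn : forall z, true -> 0 <= UNIF R (F th) z * (u j th z - c).
    move=> z _; rewrite /UNIF; case: ifP => zF; last by rewrite mul0r.
    by apply: mulr_ge0; [rewrite invr_ge0 ler0n | rewrite subr_ge0; apply: hl; exact: inF_Zs zF].
  have := @psumr_eq0P _ _ _ _ nn s0 b isT.
  move/eqP; rewrite mulf_eq0 => /orP [/eqP h|]; last by rewrite subr_eq0 => /eqP.
  by move: (proj2 (su b) bF); rewrite /SUPP h ltxx.
have aL : forall w, u j th w <= c -> LZset u j (inF F th) th w.
  by move=> w wc z' z'F; rewrite (Fc z').
have BE : psubset (pinter (Zstar u F) (LZset u j (inF F th) th)) (GammaHat u F j th).
  move=> w [zw Lw]; exists (dlt w); split; last exact/dlt_supp.
  right; split => //; split.
    by split; [exact: dlt_lot | move=> v /dlt_supp ->].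
  split; first exact: dlt_lot.
  have -> : EU u j th (dlt w) = u j th w by rewrite /EU sum_dlt.
  by rewrite -/c -(Fc a aF); exact: Lw a aF.
have FB : psubset (inF F th) (pinter (Zstar u F) (LZset u j (inF F th) th)).
  by move=> b bF; split; [exact: inF_Zs bF | apply: aL; rewrite Fc].
have LB : Lambda u F j (pinter (Zstar u F) (LZset u j (inF F th) th)) th'.
  by apply: izmax_down hE BE _; exists a; exact: FB.
split.
  move=> b bF; split; first exact: inF_Zs bF.
  by move=> z' zz; rewrite Fc //; exact: hl.
split; first exact: (Xi_exists (hF th) FB ThetaI LB).
by exists th'.
Qed.
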